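(* Let $\Sigma$ be a shift space, $Y$ an irreducible shift of finite type, and $\phi : \Sigma \to Y$ a right closing constant-to-one code. Then $\Sigma$ is a nonwandering shift of finite type.
   Context: Shift spaces are closed shift-invariant subsets of $\mathcal{A}^{\mathbb{Z}}$; a code is a continuous shift-commuting map; constant-to-one: all fibers finite of cardinality independent of $y \in Y$. Irreducible: for all words $u,v$ there is $w$ with $uwv$ a word. Nonwandering: for every word $u$ there is $w$ with $uwu$ a word. Right closing: $\phi$ never identifies two distinct left asymptotic points, where $x,\bar x$ are left asymptotic if $d(\sigma^{-n}x,\sigma^{-n}\bar x)\to0$, $d(x,\bar x)=2^{-k}$ with $k$ maximal such that $x_{[-k,k]}=\bar x_{[-k,k]}$. *)

(* Defs.v *)
From Stdlib Require Import ZArith List.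
Import ListNotations.
Open Scope Z_scope.

Definition FiniteAlphabet (A : Type) : Prop := exists l : list A, forall a, In a l.

Definition point (A : Type) := Z -> A.

Definition shift {A : Type} (x : point A) : point A := fun i => x (i + 1).
Definition shift_inv {A : Type} (x : point A) : point A := fun i => x (i - 1).

Definition shift_inv_n {A : Type} (n : nat) (x : point A) : point A :=
  fun i => x (i - Z.of_nat n).

(* x and y agree on the central block [-k,k]; i.e. d(x,y) <= 2^{-k}. *)
Definition agree {A : Type} (k : nat) (x y : point A) : Prop :=
  forall i, - Z.of_nat k <= i <= Z.of_nat k -> x i = y i.

Definition eqp {A : Type} (x y : point A) : Prop := forall i, x i = y i.

Definition closed_set {A : Type} (X : point A -> Prop) : Prop :=
  forall x, (forall k, exists y, X y /\ agree k x y) -> X x.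

Definition shift_invariant {A : Type} (X : point A -> Prop) : Prop :=
  (forall x, X x -> X (shift x)) /\ (forall x, X x -> X (shift_inv x)).

Definition shift_space {A : Type} (X : point A -> Prop) : Prop :=
  FiniteAlphabet A /\ closed_set X /\ shift_invariant X.

Definition occurs_at {A : Type} (w : list A) (x : point A) (i : Z) : Prop :=
  forall (j : nat) (a : A), nth_error w j = Some a -> x (i + Z.of_nat j) = a.

Definition is_word {A : Type} (X : point A -> Prop) (w : list A) : Prop :=
  exists x i, X x /\ occurs_at w x i.

Definition SFT {A : Type} (X : point A -> Prop) : Prop :=
  shift_space X /\
  exists F : list (list A),
    forall x, X x <-> (forall w, In w F -> forall i, ~ occurs_at w x i).

Definition irreducible {A : Type} (X : point A -> Prop) : Prop :=
  forall u v, is_word X u -> is_word X v -> exists w, is_word X (u ++ w ++ v).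

Definition nonwandering {A : Type} (X : point A -> Prop) : Prop :=
  forall u, is_word X u -> exists w, is_word X (u ++ w ++ u).

Definition code {A B : Type} (Sigma : point A -> Prop) (Y : point B -> Prop)
    (phi : point A -> point B) : Prop :=
  (forall x, Sigma x -> Y (phi x)) /\
  (forall x, Sigma x -> forall k : nat, exists m : nat,
      forall y, Sigma y -> agree m x y -> agree k (phi x) (phi y)) /\
  (forall x, Sigma x -> eqp (phi (shift x)) (shift (phi x))).

Definition fiber_card {A B : Type} (Sigma : point A -> Prop)
    (phi : point A -> point B) (y : point B) (n : nat) : Prop :=
  exists l : list (point A),
    length l = n /\
    (forall x, In x l -> Sigma x /\ eqp (phi x) y) /\
    (forall x, Sigma x -> eqp (phi x) y -> exists x', In x' l /\ eqp x x') /\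
    (forall (i j : nat) x1 x2, nth_error l i = Some x1 -> nth_error l j = Some x2 ->
        eqp x1 x2 -> i = j).

Definition constant_to_one {A B : Type} (Sigma : point A -> Prop)
    (Y : point B -> Prop) (phi : point A -> point B) : Prop :=
  exists n : nat, forall y, Y y -> fiber_card Sigma phi y n.

Definition left_asymptotic {A : Type} (x x' : point A) : Prop :=
  forall k : nat, exists N : nat, forall n : nat, (N <= n)%nat ->
    agree k (shift_inv_n n x) (shift_inv_n n x').

Definition right_closing {A B : Type} (Sigma : point A -> Prop)
    (phi : point A -> point B) : Prop :=
  forall x x', Sigma x -> Sigma x' -> left_asymptotic x x' ->
    eqp (phi x) (phi x') -> eqp x x'.

(* Main.v *)
Require Import Defs.
From Stdlib Require Import ZArith List Lia Classical ClassicalEpsilon.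
Import ListNotations.
Open Scope Z_scope.

Lemma fchoice {X Y : Type} (R : X -> Y -> Prop) :
  (forall x, exists y, R x y) -> exists f, forall x, R x (f x).
Proof.
  intros H. exists (fun x => proj1_sig (constructive_indefinite_description _ (H x))).
  intro x. exact (proj2_sig (constructive_indefinite_description _ (H x))).
Qed.

Lemma agree_mono {A} (k k' : nat) (x y : point A) :
  (k <= k')%nat -> agree k' x y -> agree k x y.
Proof. intros Hk H i Hi. apply H. lia. Qed.

Lemma agree_sym {A} k (x y : point A) : agree k x y -> agree k y x.
Proof. intros H i Hi. symmetry. apply H; auto. Qed.

Lemma agree_trans {A} k (x y z : point A) : agree k x y -> agree k y z -> agree k x z.
Proof. intros H1 H2 i Hi. rewrite H1 by auto. apply H2; auto. Qed.

Lemma inf_pigeon {C} (L : list C) (P : nat -> Prop) (f : nat -> C) :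
  (forall N, exists n, (N <= n)%nat /\ P n) ->
  (forall n, P n -> In (f n) L) ->
  exists c, In c L /\ forall N, exists n, (N <= n)%nat /\ P n /\ f n = c.
Proof.
  revert P. induction L as [|a L IH]; intros P HP Hin.
  - destruct (HP 0%nat) as [n [_ Hn]]. destruct (Hin n Hn).
  - destruct (classic (forall N, exists n, (N <= n)%nat /\ P n /\ f n = a)) as [H|H].
    + exists a. split; [left; reflexivity|exact H].
    + apply not_all_ex_not in H. destruct H as [N0 H].
      destruct (IH (fun n => P n /\ (N0 <= n)%nat /\ f n <> a)) as [c [Hc1 Hc2]].
      * intros N. destruct (HP (Nat.max N N0)) as [n [Hn1 Hn2]].
        exists n. split; [lia|]. split; [exact Hn2|]. split; [lia|].
        intro E. apply H. exists n. repeat split; try lia; auto.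
      * intros n [Hn1 [_ Hn3]]. destruct (Hin n Hn1) as [E|E]; [congruence|exact E].
      * exists c. split; [right; exact Hc1|]. intros N.
        destruct (Hc2 N) as [n [A1 [[A2 _] A3]]]. exists n. auto.
Qed.

Definition Inv {C} (s : nat -> point C) (k : nat) (b : point C) :=
  forall N, exists n, (N <= n)%nat /\ agree k (s n) b.

Lemma compact_base {C} (L : list C) (s : nat -> point C) :
  (forall n i, In (s n i) L) -> exists b, Inv s 0 b.
Proof.
  intros HL.
  destruct (inf_pigeon L (fun _ => True) (fun n => s n 0)) as [c [_ Hc]].
  - intros N. exists N. split; auto.
  - intros n _. apply HL.
  - exists (fun _ => c). intros N. destruct (Hc N) as [n [H1 [_ H2]]].
    exists n. split; auto. intros i Hi. assert (i = 0) by lia. subst. auto.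
Qed.

Lemma compact_step {C} (L : list C) (s : nat -> point C) :
  (forall n i, In (s n i) L) -> forall k b, Inv s k b ->
  exists b', Inv s (S k) b' /\ agree k b b'.
Proof.
  intros HL k b Hb.
  destruct (inf_pigeon L (fun n => agree k (s n) b) (fun n => s n (- Z.of_nat (S k))))
    as [c1 [_ Hc1]]; [exact Hb| intros; apply HL|].
  destruct (inf_pigeon L (fun n => agree k (s n) b /\ s n (- Z.of_nat (S k)) = c1)
     (fun n => s n (Z.of_nat (S k)))) as [c2 [_ Hc2]].
  { intros N. destruct (Hc1 N) as [n [H1 [H2 H3]]]. exists n. auto. }
  { intros; apply HL. }
  exists (fun i => if Z.eq_dec i (- Z.of_nat (S k)) then c1 else
              if Z.eq_dec i (Z.of_nat (S k)) then c2 else b i).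
  split.
  - intros N. destruct (Hc2 N) as [n [H1 [[H2 H3] H4]]]. exists n. split; auto.
    intros i Hi.
    destruct (Z.eq_dec i (- Z.of_nat (S k))); [subst; auto|].
    destruct (Z.eq_dec i (Z.of_nat (S k))); [subst; auto|].
    apply H2. lia.
  - intros i Hi.
    destruct (Z.eq_dec i (- Z.of_nat (S k))); [lia|].
    destruct (Z.eq_dec i (Z.of_nat (S k))); [lia|]. reflexivity.
Qed.

Definition cstep {C} (L : list C) (s : nat -> point C)
  (HL : forall n i, In (s n i) L) (k : nat) (bH : {b | Inv s k b}) :
  {b' | Inv s (S k) b' /\ agree k (proj1_sig bH) b'} :=
  constructive_indefinite_description _
    (compact_step L s HL k (proj1_sig bH) (proj2_sig bH)).

Fixpoint cseq {C} (L : list C) (s : nat -> point C)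
  (HL : forall n i, In (s n i) L) (b0 : point C) (H0 : Inv s 0 b0) (k : nat) :
  {b | Inv s k b} :=
  match k with
  | O => exist _ b0 H0
  | S k' => let r := cstep L s HL k' (cseq L s HL b0 H0 k') in
            exist _ (proj1_sig r) (proj1 (proj2_sig r))
  end.

Lemma compact {C} (L : list C) (s : nat -> point C) :
  (forall n i, In (s n i) L) ->
  exists q, forall k N, exists n, (N <= n)%nat /\ agree k (s n) q.
Proof.
  intros HL.
  destruct (compact_base L s HL) as [b0 H0].
  set (bs := fun k => proj1_sig (cseq L s HL b0 H0 k)).
  assert (Hch : forall k j, agree k (bs k) (bs (k + j)%nat)).
  { intros k j. induction j as [|j IH].
    - rewrite Nat.add_0_r. intros i _. reflexivity.
    - rewrite Nat.add_succ_r. apply agree_trans with (bs (k + j)%nat); auto.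
      unfold bs at 2. simpl.
      pose proof (proj2 (proj2_sig (cstep L s HL (k + j) (cseq L s HL b0 H0 (k + j))))) as Hb'.
      apply agree_mono with (k + j)%nat; [lia|exact Hb']. }
  exists (fun i => bs (Z.to_nat (Z.abs i)) i).
  intros k N.
  destruct (proj2_sig (cseq L s HL b0 H0 k) N) as [n [Hn Ha]].
  exists n. split; auto.
  apply agree_trans with (bs k); [exact Ha|].
  intros i Hi. set (k' := Z.to_nat (Z.abs i)).
  assert (Hk : k = (k' + (k - k'))%nat) by lia.
  pose proof (Hch k' (k - k')%nat) as H. rewrite <- Hk in H.
  symmetry. apply H. lia.
Qed.

Fixpoint words {C} (L : list C) (n : nat) : list (list C) :=
  match n with
  | O => [[]]
  | S n => flat_map (fun a => map (cons a) (words L n)) L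
  end.

Lemma words_in {C} (L : list C) : forall n w, length w = n ->
  (forall a, In a w -> In a L) -> In w (words L n).
Proof.
  induction n as [|n IH]; intros w Hl Hin.
  - destruct w; [left; reflexivity|discriminate].
  - destruct w as [|a w]; [discriminate|]. simpl.
    apply in_flat_map. exists a. split; [apply Hin; left; auto|].
    apply in_map. apply IH; [simpl in Hl; lia|]. intros b Hb. apply Hin. right; auto.
Qed.

Lemma tuple_compact {A} (Sg : point A -> Prop) (K : nat) (ls : nat -> list (point A))
  (dp : point A) :
  FiniteAlphabet A -> closed_set Sg -> (forall n, length (ls n) = K) ->
  (forall n x, In x (ls n) -> Sg x) ->
  exists ys : nat -> point A, (forall j, (j < K)%nat -> Sg (ys j)) /\
   forall k N, exists n, (N <= n)%nat /\
     forall j, (j < K)%nat -> agree k (nth j (ls n) dp) (ys j).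
Proof.
  intros [la Hla] Hcl Hlen HS.
  set (s := fun n i => map (fun x : point A => x i) (ls n)).
  destruct (compact (words la K) s) as [q Hq].
  { intros n i. apply words_in; [unfold s; rewrite length_map; auto|].
    intros a _; apply Hla. }
  assert (Key : forall k N, exists n, (N <= n)%nat /\
     forall j, (j < K)%nat -> agree k (nth j (ls n) dp) (fun i => nth j (q i) (dp 0))).
  { intros k N. destruct (Hq k N) as [n [Hn Ha]]. exists n. split; auto.
    intros j Hj i Hi. rewrite <- (Ha i Hi). unfold s.
    rewrite (@nth_indep _ _ j (dp 0) (dp i)) by (rewrite length_map, Hlen; auto).
    rewrite (map_nth (fun x : point A => x i)). reflexivity. }
  exists (fun j i => nth j (q i) (dp 0)). split; [|exact Key].
  intros j Hj. apply Hcl. intros k. destruct (Key k 0%nat) as [n [_ Hn]].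
  exists (nth j (ls n) dp). split.
  - apply (HS n). apply nth_In. rewrite Hlen; auto.
  - apply agree_sym, Hn; auto.
Qed.

Definition sh {A} (t : Z) (x : point A) : point A := fun i => x (i + t).

Lemma closed_eqp {A} (X : point A -> Prop) x y :
  closed_set X -> X y -> eqp x y -> X x.
Proof. intros Hc Hy He. apply Hc. intros k. exists y. split; auto. intros i _; auto. Qed.

Lemma sh_in {A} (X : point A -> Prop) : shift_space X -> forall t x, X x -> X (sh t x).
Proof.
  intros [_ [Hc [Hs Hsi]]] t x Hx.
  assert (H : forall n : nat, X (sh (Z.of_nat n) x) /\ X (sh (- Z.of_nat n) x)).
  { induction n as [|n [IH1 IH2]].
    - split; apply closed_eqp with x; auto; intros i; unfold sh; f_equal; lia.
    - split.
      + apply closed_eqp with (Defs.shift (sh (Z.of_nat n) x)); auto.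
        intros i; unfold sh, Defs.shift; f_equal; lia.
      + apply closed_eqp with (shift_inv (sh (- Z.of_nat n) x)); auto.
        intros i; unfold sh, Defs.shift_inv; f_equal; lia. }
  destruct (Z_le_gt_dec 0 t).
  - apply closed_eqp with (sh (Z.of_nat (Z.to_nat t)) x); [auto|apply H|].
    intros i; unfold sh; f_equal; lia.
  - apply closed_eqp with (sh (- Z.of_nat (Z.to_nat (- t))) x); [auto|apply H|].
    intros i; unfold sh; f_equal; lia.
Qed.

Lemma phi_eqp {A B} (Sg : point A -> Prop) (Y : point B -> Prop) phi :
  code Sg Y phi -> forall x y, Sg x -> Sg y -> eqp x y -> eqp (phi x) (phi y).
Proof.
  intros [_ [Hc _]] x y Hx Hy He i.
  destruct (Hc x Hx (Z.to_nat (Z.abs i))) as [m Hm].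
  apply (Hm y Hy). intros j _; auto. lia.
Qed.

Lemma phi_sh {A B} (Sg : point A -> Prop) (Y : point B -> Prop) phi :
  shift_space Sg -> code Sg Y phi ->
  forall t x, Sg x -> eqp (phi (sh t x)) (sh t (phi x)).
Proof.
  intros HS Hcode t x Hx.
  pose proof Hcode as [_ [_ Hsh]].
  assert (H : forall n : nat, eqp (phi (sh (Z.of_nat n) x)) (sh (Z.of_nat n) (phi x)) /\
                              eqp (phi (sh (- Z.of_nat n) x)) (sh (- Z.of_nat n) (phi x))).
  { induction n as [|n [IH1 IH2]].
    - split; intros i; rewrite (phi_eqp _ _ _ Hcode _ x);
      [unfold sh; f_equal; lia| apply sh_in; auto | auto | intros j; unfold sh; f_equal; lia
      |unfold sh; f_equal; lia| apply sh_in; auto | auto | intros j; unfold sh; f_equal; lia].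
    - split; intros i.
      + rewrite (phi_eqp _ _ _ Hcode _ (Defs.shift (sh (Z.of_nat n) x))).
        * rewrite Hsh by (apply sh_in; auto). unfold Defs.shift. rewrite IH1. unfold sh. f_equal; lia.
        * apply sh_in; auto.
        * pose proof (sh_in _ HS (Z.of_nat n) x Hx) as H1. destruct HS as [_ [_ [Hs _]]]. auto.
        * intros j; unfold sh, Defs.shift; f_equal; lia.
      + set (u := sh (- Z.of_nat (S n)) x).
        assert (Hu : Sg u) by (apply sh_in; auto).
        assert (E1 : phi u i = phi (Defs.shift u) (i - 1)).
        { rewrite Hsh by auto. unfold Defs.shift. f_equal; lia. }
        rewrite E1. rewrite (phi_eqp _ _ _ Hcode _ (sh (- Z.of_nat n) x)).
        * rewrite IH2. unfold sh. f_equal; lia.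
        * destruct HS as [_ [_ [Hs _]]]. auto.
        * apply sh_in; auto.
        * intros j; unfold u, sh, Defs.shift; f_equal; lia. }
  intros i.
  destruct (Z_le_gt_dec 0 t).
  - rewrite (phi_eqp _ _ _ Hcode _ (sh (Z.of_nat (Z.to_nat t)) x)).
    + rewrite (proj1 (H _)). unfold sh; f_equal; lia.
    + apply sh_in; auto.
    + apply sh_in; auto.
    + intros j; unfold sh; f_equal; lia.
  - rewrite (phi_eqp _ _ _ Hcode _ (sh (- Z.of_nat (Z.to_nat (- t))) x)).
    + rewrite (proj2 (H _)). unfold sh; f_equal; lia.
    + apply sh_in; auto.
    + apply sh_in; auto.
    + intros j; unfold sh; f_equal; lia.
Qed.

Lemma UC {A B} (Sg : point A -> Prop) (Y : point B -> Prop) phi :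
  shift_space Sg -> code Sg Y phi ->
  exists m : nat, forall x x', Sg x -> Sg x' -> agree m x x' -> phi x 0 = phi x' 0.
Proof.
  intros HS Hcode. pose proof HS as [Hfin [Hcl _]]. pose proof Hcode as [_ [Hcont _]].
  apply NNPP; intro Hn.
  assert (H : forall m : nat, exists p : point A * point A, Sg (fst p) /\ Sg (snd p) /\
     agree m (fst p) (snd p) /\ phi (fst p) 0 <> phi (snd p) 0).
  { intros m. apply NNPP; intro H. apply Hn. exists m. intros x x' Hx Hx' Ha.
    apply NNPP; intro He. apply H. exists (x, x'). simpl. auto. }
  destruct (fchoice _ H) as [f Hf].
  destruct (tuple_compact Sg 2 (fun n => [fst (f n); snd (f n)]) (fst (f 0%nat)) Hfin Hcl)
    as [ys [Hys Hlim]].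
  { reflexivity. }
  { intros n x [E|[E|[]]]; subst; apply Hf. }
  assert (E : eqp (ys 0%nat) (ys 1%nat)).
  { intros i. destruct (Hlim (Z.to_nat (Z.abs i)) (Z.to_nat (Z.abs i))) as [n [Hn1 Hn2]].
    pose proof (Hn2 0%nat ltac:(lia) i ltac:(lia)) as E0.
    pose proof (Hn2 1%nat ltac:(lia) i ltac:(lia)) as E1. simpl in E0, E1.
    rewrite <- E0, <- E1. destruct (Hf n) as [_ [_ [Ha _]]]. apply Ha. lia. }
  destruct (Hcont (ys 0%nat) (Hys 0%nat ltac:(lia)) 0%nat) as [m0 Hm0].
  destruct (Hcont (ys 1%nat) (Hys 1%nat ltac:(lia)) 0%nat) as [m1 Hm1].
  destruct (Hlim (Nat.max m0 m1) 0%nat) as [n [_ Hn2]].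
  destruct (Hf n) as [Hx [Hx' [_ Hne]]]. apply Hne.
  pose proof (Hm0 (fst (f n)) Hx) as K0. pose proof (Hm1 (snd (f n)) Hx') as K1.
  rewrite <- (K0 ltac:(apply agree_sym, agree_mono with (Nat.max m0 m1); [lia|apply (Hn2 0%nat); lia]) 0 ltac:(lia)).
  rewrite <- (K1 ltac:(apply agree_sym, agree_mono with (Nat.max m0 m1); [lia|apply (Hn2 1%nat); lia]) 0 ltac:(lia)).
  apply (phi_eqp _ _ _ Hcode); auto.
Qed.

Lemma UC_at {A B} (Sg : point A -> Prop) (Y : point B -> Prop) phi :
  shift_space Sg -> code Sg Y phi ->
  exists m : nat, forall t x x', Sg x -> Sg x' ->
    (forall s, t - Z.of_nat m <= s <= t + Z.of_nat m -> x s = x' s) -> phi x t = phi x' t.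
Proof.
  intros HS Hcode. destruct (UC Sg Y phi HS Hcode) as [m Hm]. exists m.
  intros t x x' Hx Hx' Ha.
  pose proof (Hm (sh t x) (sh t x') (sh_in _ HS t x Hx) (sh_in _ HS t x' Hx')) as H.
  rewrite !(phi_sh _ _ _ HS Hcode) in H by auto. unfold sh in H.
  replace t with (0 + t) by lia. apply H. intros i Hi. unfold sh. apply Ha. lia.
Qed.

Lemma RC {A B} (Sg : point A -> Prop) (Y : point B -> Prop) phi :
  shift_space Sg -> code Sg Y phi -> right_closing Sg phi ->
  exists M : nat, forall x x', Sg x -> Sg x' ->
    (forall i, - Z.of_nat M <= i <= 0 -> x i = x' i) ->
    (forall i, - Z.of_nat M <= i <= Z.of_nat M -> phi x i = phi x' i) -> x 1 = x' 1.
Proof.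
  intros HS Hcode Hrc. pose proof HS as [Hfin [Hcl _]]. pose proof Hcode as [_ [Hcont _]].
  apply NNPP; intro Hn.
  assert (H : forall m : nat, exists p : point A * point A, Sg (fst p) /\ Sg (snd p) /\
     (forall i, - Z.of_nat m <= i <= 0 -> fst p i = snd p i) /\
     (forall i, - Z.of_nat m <= i <= Z.of_nat m -> phi (fst p) i = phi (snd p) i) /\
     fst p 1 <> snd p 1).
  { intros m. apply NNPP; intro H. apply Hn. exists m. intros x x' Hx Hx' Ha Hb.
    apply NNPP; intro He. apply H. exists (x, x'). simpl. auto. }
  destruct (fchoice _ H) as [f Hf].
  destruct (tuple_compact Sg 2 (fun n => [fst (f n); snd (f n)]) (fst (f 0%nat)) Hfin Hcl)
    as [ys [Hys Hlim]].
  { reflexivity. }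
  { intros n x [E|[E|[]]]; subst; apply Hf. }
  assert (Hl : forall i, i <= 0 -> ys 0%nat i = ys 1%nat i).
  { intros i Hi. destruct (Hlim (Z.to_nat (Z.abs i)) (Z.to_nat (Z.abs i))) as [n [Hn1 Hn2]].
    pose proof (Hn2 0%nat ltac:(lia) i ltac:(lia)) as E0.
    pose proof (Hn2 1%nat ltac:(lia) i ltac:(lia)) as E1. simpl in E0, E1.
    rewrite <- E0, <- E1. destruct (Hf n) as [_ [_ [Ha _]]]. apply Ha. lia. }
  assert (Hp : eqp (phi (ys 0%nat)) (phi (ys 1%nat))).
  { intros t.
    destruct (Hcont (ys 0%nat) (Hys 0%nat ltac:(lia)) (Z.to_nat (Z.abs t))) as [m0 Hm0].
    destruct (Hcont (ys 1%nat) (Hys 1%nat ltac:(lia)) (Z.to_nat (Z.abs t))) as [m1 Hm1].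
    destruct (Hlim (Nat.max m0 m1) (Z.to_nat (Z.abs t))) as [n [Hn1 Hn2]].
    destruct (Hf n) as [Hx [Hx' [_ [Hb _]]]].
    pose proof (Hm0 (fst (f n)) Hx) as K0. pose proof (Hm1 (snd (f n)) Hx') as K1.
    rewrite (K0 ltac:(apply agree_sym, agree_mono with (Nat.max m0 m1); [lia|apply (Hn2 0%nat); lia]) t ltac:(lia)).
    rewrite (K1 ltac:(apply agree_sym, agree_mono with (Nat.max m0 m1); [lia|apply (Hn2 1%nat); lia]) t ltac:(lia)).
    apply Hb. lia. }
  assert (Heq : eqp (ys 0%nat) (ys 1%nat)).
  { apply Hrc; auto.
    intros k. exists k. intros n Hn0 i Hi. unfold shift_inv_n. apply Hl. lia. }
  destruct (Hlim 1%nat 0%nat) as [n [_ Hn2]].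
  destruct (Hf n) as [_ [_ [_ [_ Hne]]]]. apply Hne.
  pose proof (Hn2 0%nat ltac:(lia) 1 ltac:(lia)) as E0.
  pose proof (Hn2 1%nat ltac:(lia) 1 ltac:(lia)) as E1. simpl in E0, E1.
  rewrite E0, E1. apply Heq.
Qed.

Lemma RC_at {A B} (Sg : point A -> Prop) (Y : point B -> Prop) phi :
  shift_space Sg -> code Sg Y phi -> right_closing Sg phi ->
  exists M : nat, forall t x x', Sg x -> Sg x' ->
    (forall i, t - Z.of_nat M <= i <= t -> x i = x' i) ->
    (forall i, t - Z.of_nat M <= i <= t + Z.of_nat M -> phi x i = phi x' i) ->
    x (t + 1) = x' (t + 1).
Proof.
  intros HS Hcode Hrc. destruct (RC Sg Y phi HS Hcode Hrc) as [M HM]. exists M.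
  intros t x x' Hx Hx' Ha Hb.
  pose proof (HM (sh t x) (sh t x') (sh_in _ HS t x Hx) (sh_in _ HS t x' Hx')) as H.
  unfold sh in H. replace (t + 1) with (1 + t) by lia. apply H.
  - intros i Hi. apply Ha. lia.
  - intros i Hi. pose proof (phi_sh _ _ _ HS Hcode t x Hx i) as E1.
    pose proof (phi_sh _ _ _ HS Hcode t x' Hx' i) as E2. unfold sh in E1, E2 |- *.
    rewrite E1, E2. apply Hb. lia.
Qed.

Lemma pigeon (d : nat) (P : nat -> nat -> Prop) :
  (forall j, (j < S d)%nat -> exists k, (k < d)%nat /\ P j k) ->
  exists j j' k, j <> j' /\ (j < S d)%nat /\ (j' < S d)%nat /\ P j k /\ P j' k.
Proof.
  intros H.
  destruct (fchoice (fun j k => (j < S d)%nat -> (k < d)%nat /\ P j k)) as [f Hf].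
  { intros j. destruct (lt_dec j (S d)) as [Hj|Hj].
    - destruct (H j Hj) as [k Hk]. exists k. auto.
    - exists 0%nat. intro; lia. }
  apply NNPP; intro Hn.
  assert (ND : NoDup (map f (seq 0 (S d)))).
  { apply NoDup_map_NoDup_ForallPairs; [|apply seq_NoDup].
    intros a b Ha Hb Hab. apply in_seq in Ha, Hb. apply NNPP; intro Hne. apply Hn.
    exists a, b, (f a). destruct (Hf a) as [_ Pa]; [lia|]. destruct (Hf b) as [_ Pb]; [lia|].
    repeat split; try lia; [exact Pa | rewrite Hab; exact Pb]. }
  assert (Hi : incl (map f (seq 0 (S d))) (seq 0 d)).
  { intros k Hk. apply in_map_iff in Hk. destruct Hk as [j [<- Hj]]. apply in_seq in Hj.
    apply in_seq. destruct (Hf j); lia. }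
  pose proof (NoDup_incl_length ND Hi) as Hl. rewrite length_map, !length_seq in Hl. lia.
Qed.

Lemma Bprime {A B} (Sg : point A -> Prop) (Y : point B -> Prop) phi (d : nat) (dp : point A) :
  shift_space Sg -> code Sg Y phi -> (forall y, Y y -> fiber_card Sg phi y d) ->
  forall W : nat, exists n0 : nat, forall (l : list (point A)),
   length l = S d -> (forall x, In x l -> Sg x) ->
   (forall x x', In x l -> In x' l -> forall i, - Z.of_nat n0 <= i <= Z.of_nat n0 ->
        phi x i = phi x' i) ->
   exists j j', j <> j' /\ (j < S d)%nat /\ (j' < S d)%nat /\
     forall i, - Z.of_nat W <= i <= 0 -> nth j l dp i = nth j' l dp i.
Proof.
  intros HS Hcode Hfib W. pose proof HS as [Hfin [Hcl _]]. pose proof Hcode as [HY [Hcont _]].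
  apply NNPP; intro Hn.
  assert (H : forall n : nat, exists l : list (point A), length l = S d /\
     (forall x, In x l -> Sg x) /\
     (forall x x', In x l -> In x' l -> forall i, - Z.of_nat n <= i <= Z.of_nat n ->
        phi x i = phi x' i) /\
     forall j j', j <> j' -> (j < S d)%nat -> (j' < S d)%nat ->
       exists i, - Z.of_nat W <= i <= 0 /\ nth j l dp i <> nth j' l dp i).
  { intros n. apply NNPP; intro H. apply Hn. exists n. intros l Hl HSl Hp.
    apply NNPP; intro Hc. apply H. exists l. repeat split; auto.
    intros j j' Hjj Hj Hj'. apply NNPP; intro Hc2. apply Hc. exists j, j'.
    repeat split; auto. intros i Hi. apply NNPP; intro Hc3. apply Hc2. exists i. auto. }
  destruct (fchoice _ H) as [f Hf].
  destruct (tuple_compact Sg (S d) f dp Hfin Hcl) as [ys [Hys Hlim]].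
  { intros n; apply Hf. }
  { intros n; apply Hf. }
  assert (Ha : forall j j', (j < S d)%nat -> (j' < S d)%nat -> eqp (phi (ys j)) (phi (ys j'))).
  { intros j j' Hj Hj' t.
    destruct (Hcont (ys j) (Hys j Hj) (Z.to_nat (Z.abs t))) as [m0 Hm0].
    destruct (Hcont (ys j') (Hys j' Hj') (Z.to_nat (Z.abs t))) as [m1 Hm1].
    destruct (Hlim (Nat.max m0 m1) (Z.to_nat (Z.abs t))) as [n [Hn1 Hn2]].
    destruct (Hf n) as [Hlen [HSn [Hp _]]].
    assert (I0 : In (nth j (f n) dp) (f n)) by (apply nth_In; lia).
    assert (I1 : In (nth j' (f n) dp) (f n)) by (apply nth_In; lia).
    pose proof (Hm0 _ (HSn _ I0)) as K0. pose proof (Hm1 _ (HSn _ I1)) as K1.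
    rewrite (K0 ltac:(apply agree_sym, agree_mono with (Nat.max m0 m1); [lia|apply (Hn2 j); lia]) t ltac:(lia)).
    rewrite (K1 ltac:(apply agree_sym, agree_mono with (Nat.max m0 m1); [lia|apply (Hn2 j'); lia]) t ltac:(lia)).
    apply Hp; auto. lia. }
  assert (Hb : forall j j', j <> j' -> (j < S d)%nat -> (j' < S d)%nat ->
            exists i, ys j i <> ys j' i).
  { intros j j' Hjj Hj Hj'. destruct (Hlim W 0%nat) as [n [_ Hn2]].
    destruct (Hf n) as [_ [_ [_ Hd]]]. destruct (Hd j j' Hjj Hj Hj') as [i [Hi Hne]].
    exists i. rewrite <- (Hn2 j Hj i ltac:(lia)), <- (Hn2 j' Hj' i ltac:(lia)). auto. }
  assert (Hz : Y (phi (ys 0%nat))) by (apply HY, Hys; lia).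
  destruct (Hfib _ Hz) as [fl [Hfl [Hin [Hcov Hdist]]]].
  destruct (pigeon d (fun j k => exists x', nth_error fl k = Some x' /\ eqp (ys j) x'))
    as [j [j' [k [Hjj [Hj [Hj' [[x1 [E1 Q1]] [x2 [E2 Q2]]]]]]]]].
  { intros j Hj. destruct (Hcov (ys j) (Hys j Hj) (Ha j 0%nat Hj ltac:(lia))) as [x' [Hx' He]].
    destruct (In_nth_error _ _ Hx') as [k Hk]. exists k. split.
    - rewrite <- Hfl. apply nth_error_Some. congruence.
    - exists x'. auto. }
  rewrite E1 in E2. injection E2 as <-.
  destruct (Hb j j' Hjj Hj Hj') as [i Hi]. apply Hi. rewrite Q1, Q2. reflexivity.
Qed.

Lemma bound_lemma (K : nat) (Rl : nat -> Z -> Prop) :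
  (forall j b b', Rl j b -> b' <= b -> Rl j b') ->
  (forall j, (j < K)%nat -> exists b, Rl j b) -> exists b, forall j, (j < K)%nat -> Rl j b.
Proof.
  intros Hm. induction K as [|K IH]; intros H.
  - exists 0. intros; lia.
  - destruct IH as [b1 Hb1]. { intros j Hj. apply H. lia. }
    destruct (H K ltac:(lia)) as [b2 Hb2].
    exists (Z.min b1 b2). intros j Hj. destruct (Nat.eq_dec j K) as [->|Hne].
    + apply Hm with b2; auto; lia.
    + apply Hm with b1; [apply Hb1; lia| lia].
Qed.

Lemma nth_map_sh {A} (t : Z) (fl : list (point A)) (dp : point A) k :
  (k < length fl)%nat -> nth k (map (sh t) fl) dp = sh t (nth k fl dp).
Proof.
  intros Hk. rewrite (@nth_indep _ _ k dp (sh t dp)) by (rewrite length_map; auto).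
  apply map_nth.
Qed.

Lemma sft_main {A B} (Sg : point A -> Prop) (Y : point B -> Prop) phi (d m M n0 R Lmax : nat)
  (FY : list (list B)) (dp : point A) (p : point A) :
  shift_space Sg -> code Sg Y phi ->
  (forall y, Y y -> fiber_card Sg phi y d) ->
  (forall y, Y y <-> (forall w, In w FY -> forall i, ~ occurs_at w y i)) ->
  (forall w, In w FY -> (length w <= Lmax)%nat) ->
  (forall t x x', Sg x -> Sg x' ->
     (forall s, t - Z.of_nat m <= s <= t + Z.of_nat m -> x s = x' s) -> phi x t = phi x' t) ->
  (forall t x x', Sg x -> Sg x' -> (forall i, t - Z.of_nat M <= i <= t -> x i = x' i) ->
    (forall i, t - Z.of_nat M <= i <= t + Z.of_nat M -> phi x i = phi x' i) ->
    x (t + 1) = x' (t + 1)) ->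
  (forall l, length l = S d -> (forall x, In x l -> Sg x) ->
   (forall x x', In x l -> In x' l -> forall i, - Z.of_nat n0 <= i <= Z.of_nat n0 ->
      phi x i = phi x' i) ->
   exists j j', j <> j' /\ (j < S d)%nat /\ (j' < S d)%nat /\
     forall i, - Z.of_nat M <= i <= 0 -> nth j l dp i = nth j' l dp i) ->
  (n0 + M + m + Lmax + 1 <= R)%nat ->
  (forall i, exists g, Sg g /\ forall s, i - Z.of_nat R <= s <= i + Z.of_nat R -> g s = p s) ->
  Sg p.
Proof.
  intros HS Hcode Hfib HYc HL HUC HRC HB HR Hloc.
  pose proof HS as [_ [Hcl _]]. pose proof Hcode as [HYm _].
  destruct (fchoice _ Hloc) as [gs Hgs].
  set (z := fun i => phi (gs i) i).
  assert (Cons : forall g t, Sg g ->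
     (forall s, t - Z.of_nat m <= s <= t + Z.of_nat m -> g s = p s) -> phi g t = z t).
  { intros g t Hg Ha. unfold z. apply HUC; [auto| apply Hgs | ].
    intros s Hs. rewrite Ha by lia. symmetry. apply Hgs. lia. }
  assert (Hz : Y z).
  { apply HYc. intros w Hw i Hocc. destruct (Hgs i) as [Hg Hga].
    apply (proj1 (HYc _) (HYm _ Hg) w Hw i). intros j c Hj. rewrite <- (Hocc j c Hj).
    assert (j < length w)%nat by (apply nth_error_Some; congruence). pose proof (HL w Hw).
    apply Cons; auto. intros s Hs. apply Hga. lia. }
  destruct (Hfib z Hz) as [fl [Hfl [Hin [Hcov Hdist]]]].
  assert (Fin : forall j, (j < d)%nat -> Sg (nth j fl dp) /\ eqp (phi (nth j fl dp)) z).
  { intros j Hj. apply Hin. apply nth_In. lia. }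
  assert (Fdist : forall j j', (j < d)%nat -> (j' < d)%nat ->
            eqp (nth j fl dp) (nth j' fl dp) -> j = j').
  { intros. apply (Hdist j j' (nth j fl dp) (nth j' fl dp)); auto; apply nth_error_nth'; lia. }
  destruct (bound_lemma d (fun j b => forall j', (j' < d)%nat -> j <> j' ->
      exists q, b <= q /\ nth j fl dp q <> nth j' fl dp q)) as [i0 Hi0].
  { intros j b b' H Hb j' Hj' Hne. destruct (H j' Hj' Hne) as [q Hq]. exists q. split; [lia|apply Hq]. }
  { intros j Hj. apply bound_lemma.
    - intros j' b b' H Hb Hne. destruct (H Hne) as [q Hq]. exists q. split; [lia|apply Hq].
    - intros j' Hj'. destruct (Nat.eq_dec j j') as [E|Hne].
      + exists 0. intro; contradiction.
      + assert (Hn : ~ eqp (nth j fl dp) (nth j' fl dp)) by (intro E; apply Hne; apply Fdist; auto).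
        apply not_all_ex_not in Hn. destruct Hn as [q Hq]. exists q. intros _. exists q. split; [lia|auto]. }
  assert (Prop1 : forall x x' t, Sg x -> Sg x' -> eqp (phi x) (phi x') ->
     (forall s, t - Z.of_nat M <= s <= t -> x s = x' s) ->
     forall n : nat, forall s, t - Z.of_nat M <= s <= t + Z.of_nat n -> x s = x' s).
  { intros x x' t Hx Hx' He Ha n. induction n as [|n IH]; intros s Hs.
    - apply Ha. lia.
    - destruct (Z.eq_dec s (t + Z.of_nat (S n))) as [->|Hne]; [|apply IH; lia].
      replace (t + Z.of_nat (S n)) with ((t + Z.of_nat n) + 1) by lia.
      apply HRC; auto.
      + intros i Hi. apply IH. lia. }
  assert (FD : forall t, t <= i0 -> forall j j', (j < d)%nat -> (j' < d)%nat -> j <> j' ->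
     ~ (forall s, t - Z.of_nat M <= s <= t -> nth j fl dp s = nth j' fl dp s)).
  { intros t Ht j j' Hj Hj' Hne Ha. destruct (Hi0 j Hj j' Hj' Hne) as [q [Hq Hqn]].
    apply Hqn. destruct (Fin j Hj) as [S1 E1]. destruct (Fin j' Hj') as [S2 E2].
    apply (Prop1 _ _ t S1 S2) with (n := Z.to_nat (q - t)); auto.
    - intros i. rewrite E1, E2. reflexivity.
    - lia. }
  assert (Main : forall t, t <= i0 -> exists x, Sg x /\ forall s, t - Z.of_nat M <= s -> x s = p s).
  { intros t Ht.
    destruct (Hgs t) as [Hgt Hgta].
    assert (HKey : exists k, (k < d)%nat /\
       forall s, t - Z.of_nat M <= s <= t -> gs t s = nth k fl dp s).
    { destruct (HB (sh t (gs t) :: map (sh t) fl)) as [j [j' [Hne [Hj [Hj' Hag]]]]].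
      - simpl. rewrite length_map. congruence.
      - intros x [<-|Hx]; [apply sh_in; auto|].
        apply in_map_iff in Hx. destruct Hx as [y [<- Hy]]. apply sh_in; auto. apply Hin; auto.
      - assert (Hall : forall x, In x (sh t (gs t) :: map (sh t) fl) ->
             forall i, - Z.of_nat n0 <= i <= Z.of_nat n0 -> phi x i = z (i + t)).
        { intros x [<-|Hx] i Hi.
          - rewrite (phi_sh _ _ _ HS Hcode) by auto. unfold sh. apply Cons; auto.
            intros s Hs. apply Hgta. lia.
          - apply in_map_iff in Hx. destruct Hx as [y [<- Hy]]. destruct (Hin y Hy) as [Sy Ey].
            rewrite (phi_sh _ _ _ HS Hcode) by auto. unfold sh. apply Ey. }
        intros x x' Hx Hx' i Hi. rewrite (Hall x Hx i Hi), (Hall x' Hx' i Hi). reflexivity.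
      - destruct j as [|k]; destruct j' as [|k']; [congruence| | |].
        + exists k'. split; [lia|]. intros s Hs. simpl in Hag.
          rewrite nth_map_sh in Hag by lia. specialize (Hag (s - t) ltac:(lia)).
          unfold sh in Hag. replace (s - t + t) with s in Hag by lia. exact Hag.
        + exists k. split; [lia|]. intros s Hs. simpl in Hag.
          rewrite nth_map_sh in Hag by lia. specialize (Hag (s - t) ltac:(lia)).
          unfold sh in Hag. replace (s - t + t) with s in Hag by lia. symmetry; exact Hag.
        + exfalso. simpl in Hag. rewrite !nth_map_sh in Hag by lia.
          apply (FD t Ht k k'); try lia. intros s Hs. specialize (Hag (s - t) ltac:(lia)).
          unfold sh in Hag. replace (s - t + t) with s in Hag by lia. exact Hag. }
    destruct HKey as [k [Hk Hka]]. destruct (Fin k Hk) as [Sx Ex].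
    exists (nth k fl dp). split; auto.
    assert (Hn : forall n : nat, forall s, t - Z.of_nat M <= s <= t + Z.of_nat n ->
                  nth k fl dp s = p s).
    { induction n as [|n IH]; intros s Hs.
      - rewrite <- Hka by lia. apply Hgta. lia.
      - destruct (Z.eq_dec s (t + Z.of_nat (S n))) as [->|Hne]; [|apply IH; lia].
        set (u := t + Z.of_nat n).
        destruct (Hgs u) as [Hgu Hgua].
        replace (t + Z.of_nat (S n)) with (u + 1) by (unfold u; lia).
        rewrite <- (Hgua (u + 1)) by lia. symmetry. apply HRC; auto.
        + intros i Hi. rewrite Hgua by lia. symmetry. apply IH. unfold u in *. lia.
        + intros i Hi. rewrite Ex. apply Cons; auto. intros s0 Hs0. apply Hgua. lia. }
    intros s Hs. apply (Hn (Z.to_nat (s - t))). lia. }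
  apply Hcl. intros k. destruct (Main (Z.min i0 (- Z.of_nat k)) ltac:(lia)) as [x [Sx Hx]].
  exists x. split; auto. intros i Hi. symmetry. apply Hx. lia.
Qed.

Definition window {A} (x : point A) (a : Z) (n : nat) : list A :=
  map (fun j => x (a + Z.of_nat j)) (seq 0 n).

Lemma window_len {A} (x : point A) a n : length (window x a n) = n.
Proof. unfold window. rewrite length_map, length_seq. reflexivity. Qed.

Lemma nth_error_window {A} (x : point A) a n j :
  (j < n)%nat -> nth_error (window x a n) j = Some (x (a + Z.of_nat j)).
Proof.
  intros Hj. unfold window. rewrite nth_error_map, nth_error_seq.
  destruct (Nat.ltb_spec j n); [|lia]. reflexivity.
Qed.

Lemma occurs_window {A} (x : point A) a n : occurs_at (window x a n) x a.
Proof.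
  intros j c H. assert (Hj : (j < n)%nat).
  { rewrite <- (window_len x a n). apply nth_error_Some. congruence. }
  rewrite nth_error_window in H by auto. congruence.
Qed.

Lemma occurs_shift {A} (w : list A) x i a : occurs_at w x i -> occurs_at w (sh (i - a) x) a.
Proof.
  intros H j c Hj. unfold sh. rewrite <- (H j c Hj). f_equal. lia.
Qed.

Lemma filter_ex {T} (P : T -> Prop) (l : list T) :
  exists l', forall w, In w l' <-> In w l /\ P w.
Proof.
  induction l as [|a l [l' IH]].
  - exists []. intros w; simpl; tauto.
  - destruct (classic (P a)) as [Ha|Ha].
    + exists (a :: l'). intros w. simpl. rewrite IH. split.
      * intros [<-|H]; tauto.
      * intros [[<-|H] H2]; tauto.
    + exists l'. intros w. simpl. rewrite IH. split.
      * tauto.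
      * intros [[<-|H] H2]; tauto.
Qed.

Lemma list_max_in (l : list nat) x : In x l -> (x <= list_max l)%nat.
Proof.
  intros H. pose proof (proj1 (list_max_le l (list_max l)) (Nat.le_refl _)) as HF.
  rewrite Forall_forall in HF. auto.
Qed.

Lemma sigma_SFT {A B} (Sg : point A -> Prop) (Y : point B -> Prop) phi d :
  shift_space Sg -> SFT Y -> code Sg Y phi -> right_closing Sg phi ->
  (forall y, Y y -> fiber_card Sg phi y d) -> SFT Sg.
Proof.
  intros HS HY Hcode Hrc Hfib. split; [exact HS|].
  pose proof HS as [[la Hla] [Hcl _]].
  destruct la as [|a la'].
  { exists []. intros x. exfalso. destruct (Hla (x 0)). }
  set (dp := fun _ : Z => a).
  destruct HY as [_ [FY HFY]].
  destruct (UC_at Sg Y phi HS Hcode) as [m HUC].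
  destruct (RC_at Sg Y phi HS Hcode Hrc) as [M HRC].
  destruct (Bprime Sg Y phi d dp HS Hcode Hfib M) as [n0 HB].
  set (Lmax := list_max (map (@length B) FY)).
  set (R := (n0 + M + m + Lmax + 1)%nat).
  destruct (filter_ex (fun w => ~ is_word Sg w) (words (a :: la') (2 * R + 1))) as [F HF].
  exists F. intros x. split.
  - intros Hx w Hw i Hocc. apply HF in Hw. destruct Hw as [_ Hw]. apply Hw. exists x, i. auto.
  - intros Hx. apply (sft_main Sg Y phi d m M n0 R Lmax FY dp x HS Hcode Hfib HFY); auto.
    + intros w Hw. unfold Lmax. apply list_max_in. apply in_map. auto.
    + intros i.
      set (w := window x (i - Z.of_nat R) (2 * R + 1)).
      assert (Hw : is_word Sg w).
      { apply NNPP; intro Hn. apply (Hx w) with (i - Z.of_nat R).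
        - apply HF. split; [|exact Hn]. apply words_in; [apply window_len|intros; apply Hla].
        - apply occurs_window. }
      destruct Hw as [y [j [Hy Hocc]]].
      exists (sh (j - (i - Z.of_nat R)) y). split; [apply sh_in; auto|].
      intros s Hs. unfold sh.
      pose proof (nth_error_window x (i - Z.of_nat R) (2 * R + 1) (Z.to_nat (s - (i - Z.of_nat R)))
                    ltac:(lia)) as E.
      pose proof (Hocc _ _ E) as E2.
      replace (i - Z.of_nat R + Z.of_nat (Z.to_nat (s - (i - Z.of_nat R)))) with s in E2 by lia.
      rewrite <- E2. f_equal. lia.
Qed.

Lemma propagate {A B} (Sg : point A -> Prop) (phi : point A -> point B) (M : nat) :
  (forall t x x', Sg x -> Sg x' -> (forall i, t - Z.of_nat M <= i <= t -> x i = x' i) ->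
    (forall i, t - Z.of_nat M <= i <= t + Z.of_nat M -> phi x i = phi x' i) ->
    x (t + 1) = x' (t + 1)) ->
  forall x x' t, Sg x -> Sg x' -> eqp (phi x) (phi x') ->
     (forall s, t - Z.of_nat M <= s <= t -> x s = x' s) ->
     forall s, t - Z.of_nat M <= s -> x s = x' s.
Proof.
  intros HRC x x' t Hx Hx' He Ha.
  assert (H : forall n : nat, forall s, t - Z.of_nat M <= s <= t + Z.of_nat n -> x s = x' s).
  { induction n as [|n IH]; intros s Hs.
    - apply Ha. lia.
    - destruct (Z.eq_dec s (t + Z.of_nat (S n))) as [->|Hne]; [|apply IH; lia].
      replace (t + Z.of_nat (S n)) with ((t + Z.of_nat n) + 1) by lia.
      apply HRC; auto.
      + intros i Hi. apply IH. lia. }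
  intros s Hs. apply (H (Z.to_nat (s - t))). lia.
Qed.

Lemma per_iter {A} (f : point A) (Q : nat) :
  (forall s, f (s + Z.of_nat Q) = f s) -> forall n s, f (s + Z.of_nat (Q * n)) = f s.
Proof.
  intros H. induction n as [|n IH]; intros s.
  - rewrite Nat.mul_0_r. f_equal; lia.
  - replace (s + Z.of_nat (Q * S n)) with ((s + Z.of_nat (Q * n)) + Z.of_nat Q) by lia.
    rewrite H. apply IH.
Qed.

Lemma per_eq {A} (f g : point A) (Q Q' : nat) t0 :
  (0 < Q)%nat -> (0 < Q')%nat ->
  (forall s, f (s + Z.of_nat Q) = f s) -> (forall s, g (s + Z.of_nat Q') = g s) ->
  (forall s, t0 <= s -> f s = g s) -> eqp f g.
Proof.
  intros HQ HQ' Hf Hg H s.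
  set (c := Z.to_nat (t0 - s)).
  rewrite <- (per_iter f Q Hf (Q' * c) s), <- (per_iter g Q' Hg (Q * c) s).
  replace (Q' * (Q * c))%nat with (Q * (Q' * c))%nat by lia.
  apply H. assert (Hc : t0 - s <= Z.of_nat c) by (unfold c; lia). clearbody c. assert (c <= Q' * c)%nat by (destruct Q'; [lia| simpl; lia]).
  assert (Q' * c <= Q * (Q' * c))%nat by (destruct Q; [lia| simpl; lia]). lia.
Qed.

Lemma occurs_app {A} (u v : list A) x i :
  occurs_at u x i -> occurs_at v x (i + Z.of_nat (length u)) -> occurs_at (u ++ v) x i.
Proof.
  intros Hu Hv j c Hj. rewrite nth_error_app in Hj.
  destruct (Nat.ltb_spec j (length u)).
  - apply Hu; auto.
  - rewrite <- (Hv _ _ Hj). f_equal. lia.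
Qed.

Lemma periodic_fiber {A B} (Sg : point A -> Prop) (Y : point B -> Prop) phi (d : nat)
   (z : point B) (P : nat) (fx : point A) (fl : list (point A)) :
  shift_space Sg -> code Sg Y phi -> (0 < P)%nat ->
  (forall s, z (s + Z.of_nat P) = z s) ->
  length fl = d ->
  (forall x, Sg x -> eqp (phi x) z -> exists x', In x' fl /\ eqp x x') ->
  Sg fx -> eqp (phi fx) z ->
  exists Q : nat, (0 < Q)%nat /\ forall s, fx (s + Z.of_nat Q) = fx s.
Proof.
  intros HS Hcode HP Hz Hfl Hcov Hfx Efx.
  destruct (pigeon d (fun e k => exists x', nth_error fl k = Some x' /\
                    eqp (sh (Z.of_nat (P * e)) fx) x'))
    as [e [e' [k [Hee [He [He' [[x1 [E1 Q1]] [x2 [E2 Q2]]]]]]]]].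
  { intros e He.
    destruct (Hcov (sh (Z.of_nat (P * e)) fx)) as [x' [Hx' Hq]].
    - apply sh_in; auto.
    - intros s. rewrite (phi_sh _ _ _ HS Hcode) by auto. unfold sh. rewrite Efx.
      apply (per_iter z P Hz).
    - destruct (In_nth_error _ _ Hx') as [k Hk]. exists k. split.
      + rewrite <- Hfl. apply nth_error_Some. congruence.
      + exists x'. auto. }
  rewrite E1 in E2. injection E2 as <-.
  assert (Heq : eqp (sh (Z.of_nat (P * e)) fx) (sh (Z.of_nat (P * e')) fx)).
  { intros s. rewrite Q1, Q2. reflexivity. }
  destruct (Nat.lt_total e e') as [Hlt|[Heq'|Hlt]]; [|contradiction|].
  - exists (P * (e' - e))%nat. split; [nia|]. intros s.
    pose proof (Heq (s - Z.of_nat (P * e))) as E. unfold sh in E.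
    replace (s - Z.of_nat (P * e) + Z.of_nat (P * e)) with s in E by lia.
    rewrite E. f_equal. nia.
  - exists (P * (e - e'))%nat. split; [nia|]. intros s.
    pose proof (Heq (s - Z.of_nat (P * e'))) as E. unfold sh in E.
    replace (s - Z.of_nat (P * e') + Z.of_nat (P * e')) with s in E by lia.
    rewrite <- E. f_equal. nia.
Qed.

Lemma sigma_NW {A B} (Sg : point A -> Prop) (Y : point B -> Prop) phi d :
  shift_space Sg -> SFT Y -> irreducible Y -> code Sg Y phi -> right_closing Sg phi ->
  (forall y, Y y -> fiber_card Sg phi y d) -> nonwandering Sg.
Proof.
  intros HS HY Hirr Hcode Hrc Hfib u [x [i0 [Hx Hocc]]].
  pose proof HS as [_ [Hcl _]]. pose proof Hcode as [HYm _].
  destruct HY as [_ [FY HFY]].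
  set (Lmax := list_max (map (@length B) FY)).
  assert (HL : forall w, In w FY -> (length w <= Lmax)%nat)
    by (intros; apply list_max_in, in_map; auto).
  destruct (RC_at Sg Y phi HS Hcode Hrc) as [M HRC].
  set (W := Nat.max M (length u)).
  destruct (Bprime Sg Y phi d x HS Hcode Hfib W) as [n0 HB].
  set (t := i0 + Z.of_nat (length u) - 1).
  set (y := phi x).
  set (a := t - Z.of_nat n0).
  set (v := window y a (2 * n0 + 1 + Lmax)).
  assert (Hv : is_word Y v).
  { exists y, a. split; [apply HYm; auto| apply occurs_window]. }
  destruct (Hirr v v Hv Hv) as [w Hw].
  destruct Hw as [yy [c [Hyy Hoc]]].
  set (P := (length v + length w)%nat).
  assert (Hlv : length v = (2 * n0 + 1 + Lmax)%nat) by apply window_len.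
  assert (HP : (0 < P)%nat) by (unfold P; lia).
  assert (V1 : forall q, (q < length v)%nat -> yy (c + Z.of_nat q) = y (a + Z.of_nat q)).
  { intros q Hq. apply Hoc. rewrite nth_error_app1 by auto. unfold v. apply nth_error_window. lia. }
  assert (V2 : forall q, (q < length v)%nat ->
             yy (c + Z.of_nat P + Z.of_nat q) = yy (c + Z.of_nat q)).
  { intros q Hq. rewrite V1 by auto.
    replace (c + Z.of_nat P + Z.of_nat q) with (c + Z.of_nat (P + q)) by lia. apply Hoc.
    rewrite nth_error_app2 by (unfold P; lia). rewrite nth_error_app2 by (unfold P; lia).
    replace (P + q - length v - length w)%nat with q by (unfold P; lia).
    unfold v. apply nth_error_window. lia. }
  set (z := fun s => yy (c + (s - a) mod Z.of_nat P)).
  assert (Z1 : forall s, a <= s < a + Z.of_nat (length v) -> z s = y s).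
  { intros s Hs. unfold z. rewrite Z.mod_small by (unfold P in *; lia).
    pose proof (V1 (Z.to_nat (s - a)) ltac:(lia)) as E.
    replace (c + Z.of_nat (Z.to_nat (s - a))) with (c + (s - a)) in E by lia.
    rewrite E. f_equal. lia. }
  assert (Z2 : forall s, z (s + Z.of_nat P) = z s).
  { intros s. unfold z. f_equal. f_equal.
    replace (s + Z.of_nat P - a) with ((s - a) + 1 * Z.of_nat P) by lia.
    apply Z_mod_plus_full. }
  assert (Z3 : Y z).
  { apply HFY. intros w' Hw' s Hocc'. apply (proj1 (HFY yy) Hyy w' Hw' (c + (s - a) mod Z.of_nat P)).
    intros j cc Hj. rewrite <- (Hocc' j cc Hj).
    assert (Hjl : (j < length w')%nat) by (apply nth_error_Some; congruence).
    pose proof (HL w' Hw').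
    unfold z. set (r := (s - a) mod Z.of_nat P).
    assert (Hr : 0 <= r < Z.of_nat P) by (apply Z.mod_pos_bound; lia).
    assert (E : (s + Z.of_nat j - a) mod Z.of_nat P = (r + Z.of_nat j) mod Z.of_nat P).
    { unfold r. rewrite Z.add_mod_idemp_l by lia. f_equal. lia. }
    rewrite E.
    destruct (Z_lt_le_dec (r + Z.of_nat j) (Z.of_nat P)).
    - rewrite Z.mod_small by lia. f_equal. lia.
    - replace (r + Z.of_nat j) with ((r + Z.of_nat j - Z.of_nat P) + 1 * Z.of_nat P) by lia.
      rewrite Z_mod_plus_full. rewrite Z.mod_small by lia.
      pose proof (V2 (Z.to_nat (r + Z.of_nat j - Z.of_nat P)) ltac:(lia)) as E2.
      replace (c + Z.of_nat (Z.to_nat (r + Z.of_nat j - Z.of_nat P)))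
        with (c + (r + Z.of_nat j - Z.of_nat P)) in E2 by lia.
      rewrite <- E2. f_equal. lia. }
  destruct (Hfib z Z3) as [fl [Hfl [Hin [Hcov Hdist]]]].
  assert (Fin : forall j, (j < d)%nat -> Sg (nth j fl x) /\ eqp (phi (nth j fl x)) z).
  { intros j Hj. apply Hin. apply nth_In. lia. }
  assert (Fdist : forall j j', (j < d)%nat -> (j' < d)%nat ->
            eqp (nth j fl x) (nth j' fl x) -> j = j').
  { intros. apply (Hdist j j' (nth j fl x) (nth j' fl x)); auto; apply nth_error_nth'; lia. }
  assert (Per : forall k, (k < d)%nat -> exists Q : nat, (0 < Q)%nat /\
             forall s, nth k fl x (s + Z.of_nat Q) = nth k fl x s).
  { intros k Hk. destruct (Fin k Hk) as [S1 E1].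
    apply (periodic_fiber Sg Y phi d z P (nth k fl x) fl HS Hcode HP Z2 Hfl Hcov S1 E1). }
  assert (Dist : forall k k', (k < d)%nat -> (k' < d)%nat -> k <> k' ->
     ~ (forall s, t - Z.of_nat M <= s <= t -> nth k fl x s = nth k' fl x s)).
  { intros k k' Hk Hk' Hne Ha. apply Hne. apply Fdist; auto.
    destruct (Fin k Hk) as [S1 E1]. destruct (Fin k' Hk') as [S2 E2].
    destruct (Per k Hk) as [Q [HQ PQ]]. destruct (Per k' Hk') as [Q' [HQ' PQ']].
    apply (per_eq _ _ Q Q' (t - Z.of_nat M)); auto.
    apply (propagate Sg phi M HRC _ _ t S1 S2); auto.
    intros i. rewrite E1, E2. reflexivity. }
  assert (HKey : exists k, (k < d)%nat /\
       forall s, t - Z.of_nat W <= s <= t -> x s = nth k fl x s).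
  { destruct (HB (sh t x :: map (sh t) fl)) as [j [j' [Hne [Hj [Hj' Hag]]]]].
    - simpl. rewrite length_map. congruence.
    - intros x0 [<-|Hx0]; [apply sh_in; auto|].
      apply in_map_iff in Hx0. destruct Hx0 as [y0 [<- Hy0]]. apply sh_in; auto. apply Hin; auto.
    - assert (Hall : forall x0, In x0 (sh t x :: map (sh t) fl) ->
           forall i, - Z.of_nat n0 <= i <= Z.of_nat n0 -> phi x0 i = z (i + t)).
      { intros x0 [<-|Hx0] i Hi.
        - rewrite (phi_sh _ _ _ HS Hcode) by auto. unfold sh. symmetry. apply Z1.
          unfold a. lia.
        - apply in_map_iff in Hx0. destruct Hx0 as [y0 [<- Hy0]]. destruct (Hin y0 Hy0) as [Sy Ey].
          rewrite (phi_sh _ _ _ HS Hcode) by auto. unfold sh. apply Ey. }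
      intros x0 x' Hx0 Hx' i Hi. rewrite (Hall x0 Hx0 i Hi), (Hall x' Hx' i Hi). reflexivity.
    - destruct j as [|k]; destruct j' as [|k']; [congruence| | |].
      + exists k'. split; [lia|]. intros s Hs. simpl in Hag.
        rewrite nth_map_sh in Hag by lia. specialize (Hag (s - t) ltac:(lia)).
        unfold sh in Hag. replace (s - t + t) with s in Hag by lia. exact Hag.
      + exists k. split; [lia|]. intros s Hs. simpl in Hag.
        rewrite nth_map_sh in Hag by lia. specialize (Hag (s - t) ltac:(lia)).
        unfold sh in Hag. replace (s - t + t) with s in Hag by lia. symmetry; exact Hag.
      + exfalso. simpl in Hag. rewrite !nth_map_sh in Hag by lia.
        apply (Dist k k'); try lia. intros s Hs. specialize (Hag (s - t) ltac:(lia)).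
        unfold sh in Hag. replace (s - t + t) with s in Hag by lia. exact Hag. }
  destruct HKey as [k [Hk Hka]].
  destruct (Fin k Hk) as [Sf _]. destruct (Per k Hk) as [Q [HQ PQ]].
  set (fx := nth k fl x) in *.
  assert (Hu : occurs_at u fx i0).
  { intros j cc Hj. assert (Hjl : (j < length u)%nat) by (apply nth_error_Some; congruence).
    rewrite <- Hka by (unfold t, W; lia). apply Hocc; auto. }
  set (w' := window fx (i0 + Z.of_nat (length u)) (Q * length u - length u)).
  exists w'. exists fx, i0. split; auto.
  apply occurs_app; auto. apply occurs_app.
  - apply occurs_window.
  - unfold w'. rewrite window_len. intros j cc Hj.
    assert (Hle : (length u <= Q * length u)%nat) by (destruct Q; [lia|simpl; lia]).
    replace (i0 + Z.of_nat (length u) + Z.of_nat (Q * length u - length u) + Z.of_nat j)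
      with ((i0 + Z.of_nat j) + Z.of_nat (Q * length u)) by lia.
    rewrite (per_iter fx Q PQ). apply Hu; auto.
Qed.

Theorem proposition3p5 (A B : Type) (Sigma : point A -> Prop) (Y : point B -> Prop)
    (phi : point A -> point B) :
  shift_space Sigma -> SFT Y -> irreducible Y ->
  code Sigma Y phi -> right_closing Sigma phi -> constant_to_one Sigma Y phi ->
  SFT Sigma /\ nonwandering Sigma.
Proof.
  intros HS HY Hirr Hcode Hrc [d Hd]. split.
  - apply (sigma_SFT Sigma Y phi d); auto.
  - apply (sigma_NW Sigma Y phi d); auto.
Qed.
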